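(* Let $p,q$ be distinct primes and $n\geqslant1$. Then the complexity of $C_{p^nq}$ is $3k+1$ if $n=2k$, and $3k+2$ if $n=2k+1$.
   Context: For a finite group $G$, an arrow is a pair $(H,K)$ of subgroups with $H\leqslant K$; identity arrows are those with $H=K$. A $G$-transfer system is a set of arrows containing all identities and closed under composition ($(H,K),(K,L)\Rightarrow(H,L)$), conjugation ($(H,K)\Rightarrow(gHg^{-1},gKg^{-1})$) and restriction ($(H,K)$ and $L\leqslant K\Rightarrow(H\cap L,L)$). For a set $S$ of non-identity arrows, $\langle S\rangle$ is the smallest transfer system containing $S$. A minimal generating set of a transfer system $\mathsf{T}$ is a set $S\subseteq\mathsf{T}$ of non-identity arrows with $\langle S\rangle=\mathsf{T}$ and $\langle S\setminus\{s\}\rangle\neq\mathsf{T}$ for all $s\in S$; all such have the same cardinality $\mathfrak{m}(\mathsf{T})$. The complexity $\mathfrak{c}(G)$ is the maximum of $\mathfrak{m}(\mathsf{T})$ over all $G$-transfer systems $\mathsf{T}$. *)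

(* Defs.v *)
From mathcomp Require Import all_boot all_fingroup.
Set Implicit Arguments. Unset Strict Implicit. Unset Printing Implicit Defensive.
Local Open Scope group_scope.

Section TransferSystems.
Variable gT : finGroupType.

Definition arrowT := ({set gT} * {set gT})%type.

Definition is_subgroup (G H : {set gT}) : bool := group_set H && (H \subset G).

Definition is_arrow (G : {set gT}) (a : arrowT) : bool :=
  [&& is_subgroup G a.1, is_subgroup G a.2 & a.1 \subset a.2].

Definition is_identity_arrow (a : arrowT) : bool := a.1 == a.2.

Definition is_transfer_system (G : {set gT}) (T : {set arrowT}) : bool :=
  [&& [forall a in T, is_arrow G a],
      [forall H : {set gT}, is_subgroup G H ==> ((H, H) \in T)],
      [forall a in T, forall b in T, (a.2 == b.1) ==> ((a.1, b.2) \in T)],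
      [forall a in T, forall g in G, (a.1 :^ g, a.2 :^ g) \in T] &
      [forall a in T, forall L : {set gT},
          is_subgroup a.2 L ==> ((a.1 :&: L, L) \in T)]].

Definition gen_ts (G : {set gT}) (S : {set arrowT}) : {set arrowT} :=
  \bigcap_(T | is_transfer_system G T && (S \subset T)) T.

Definition minimal_generating (G : {set gT}) (S T : {set arrowT}) : bool :=
  [&& S \subset T, [forall a in S, ~~ is_identity_arrow a],
      gen_ts G S == T &
      [forall s in S, gen_ts G (S :\ s) != T]].

(* m(T): the cardinality of a minimal generating set of T (all such have
   the same cardinality; we take the maximum to get a total definition). *)
Definition mgen (G : {set gT}) (T : {set arrowT}) : nat :=
  \max_(S : {set arrowT} | minimal_generating G S T) #|S|.

Definition complexity (G : {set gT}) : nat :=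
  \max_(T : {set arrowT} | is_transfer_system G T) mgen G T.

End TransferSystems.

(* Main.v *)
Require Import Defs.
From mathcomp Require Import all_boot all_fingroup all_solvable.
From mathcomp Require Import zify.
Set Implicit Arguments. Unset Strict Implicit. Unset Printing Implicit Defensive.

Section XWorld.
Variable n : nat.
Definition X := ('I_n.+1 * bool)%type.
Implicit Types (R B S : {set X * X}).
Definition leX (u v : X) := (u.1 <= v.1) && (u.2 <= v.2).
Definition mnX (u v : X) : X := (if u.1 <= v.1 then u.1 else v.1, u.2 && v.2).
Definition TSX (B : {set X * X}) : Prop :=
  [/\ forall a, a \in B -> leX a.1 a.2,
      forall u, (u, u) \in B,
      forall u v w, (u, v) \in B -> (v, w) \in B -> (u, w) \in B &
      forall u v z, (u, v) \in B -> leX z v -> (mnX u z, z) \in B].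
Definition TSXb (B : {set X*X}) : bool :=
  [&& [forall a in B, leX a.1 a.2], [forall u, (u,u) \in B],
      [forall u, forall v, forall w, ((u,v) \in B) && ((v,w) \in B) ==> ((u,w) \in B)] &
      [forall u, forall v, forall z, ((u,v) \in B) && leX z v ==> ((mnX u z, z) \in B)]].

Lemma TSXP B : reflect (TSX B) (TSXb B).
Proof.
apply: (iffP idP).
  case/and4P=> /forall_inP h1 /forallP h2 /forallP h3 /forallP h4; split=> //.
  - by move=> u v w H1 H2; have /forallP/(_ v)/forallP/(_ w) := h3 u; rewrite H1 H2.
  - by move=> u v z H1 H2; have /forallP/(_ v)/forallP/(_ z) := h4 u; rewrite H1 H2.
case=> h1 h2 h3 h4; apply/and4P; split.
- by apply/forall_inP.
- by apply/forallP.
- apply/forallP=> u; apply/forallP=> v; apply/forallP=> w; apply/implyP=> /andP[]; exact: h3.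
- apply/forallP=> u; apply/forallP=> v; apply/forallP=> z; apply/implyP=> /andP[]; exact: h4.
Qed.

Definition clX (R : {set X*X}) : {set X*X} :=
  [set a | [forall B : {set X*X}, TSXb B ==> (R \subset B) ==> (a \in B)]].

Lemma clXP R a : reflect (forall B, TSX B -> R \subset B -> a \in B) (a \in clX R).
Proof.
rewrite inE; apply: (iffP forallP).
  by move=> h B /TSXP tB sRB; have := h B; rewrite tB sRB.
by move=> h B; apply/implyP=> /TSXP tB; apply/implyP=> sRB; apply: h.
Qed.

Definition arrX := [set a : X*X | leX a.1 a.2].

Lemma leXxx u : leX u u.
Proof. by rewrite /leX !leqnn. Qed.

Lemma leX_trans u v w : leX u v -> leX v w -> leX u w.
Proof. by case/andP=> h1 h2 /andP[h3 h4]; rewrite /leX (leq_trans h1 h3) (leq_trans h2 h4). Qed.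

Lemma leX_anti u v : leX u v -> leX v u -> u = v.
Proof.
case: u v => [a e] [b f] /andP[/= h1 h2] /andP[/= h3 h4].
have -> : a = b by apply: val_inj; apply/eqP; rewrite eqn_leq h1 h3.
by congr pair; case: e f h2 h4 => [] [].
Qed.

Lemma mnX1 u v : val (mnX u v).1 = minn u.1 v.1.
Proof. by rewrite /mnX /=; case: leqP => h; lia. Qed.

Lemma mnX2 u v : (mnX u v).2 = u.2 && v.2.
Proof. by []. Qed.

Lemma leX_mnX u z v : leX z v -> leX (mnX u z) z.
Proof. by move=> _; rewrite /leX mnX1 geq_minr /=; case: u.2; case: z.2. Qed.

Lemma mnX_id u z : leX u z -> mnX u z = u.
Proof.
case: u z => [a e] [b f] /andP[/= h1 h2]; rewrite /mnX /= h1.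
by congr pair; case: e f h2 => [] [].
Qed.

Lemma TSX_arrX : TSX arrX.
Proof.
split.
- by move=> a; rewrite inE.
- by move=> u; rewrite inE leXxx.
- by move=> u v w; rewrite !inE; apply: leX_trans.
- by move=> u v z _ h; rewrite inE; apply: leX_mnX h.
Qed.

Lemma clX_sub R : R \subset clX R.
Proof. by apply/subsetP=> a aR; apply/clXP=> B _ /subsetP; apply. Qed.

Lemma clX_min R B : TSX B -> R \subset B -> clX R \subset B.
Proof. by move=> tB sRB; apply/subsetP=> a /clXP; apply. Qed.

Lemma clX_mono R R' : R \subset R' -> clX R \subset clX R'.
Proof.
move=> sRR'; apply/subsetP=> a /clXP h; apply/clXP=> B tB sR'B.
by apply: h tB (subset_trans sRR' sR'B).
Qed.

Lemma clX_TS R : R \subset arrX -> TSX (clX R).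
Proof.
move=> sRa; split.
- move=> a /clXP h; have := h _ TSX_arrX sRa; by rewrite inE.
- by move=> u; apply/clXP=> B [].
- move=> u v w /clXP h1 /clXP h2; apply/clXP=> B tB sRB.
  by case: (tB) => _ _ h _; apply: h (h1 _ tB sRB) (h2 _ tB sRB).
- move=> u v z /clXP h1 hz; apply/clXP=> B tB sRB.
  by case: (tB) => _ _ _ h; apply: h (h1 _ tB sRB) hz.
Qed.

Definition indepX (S : {set X*X}) := forall s, s \in S -> s \notin clX (S :\ s).


Lemma max_attain (I : finType) (P : pred I) (F : I -> nat) i0 :
  P i0 -> exists2 i, P i & \max_(j | P j) F j = F i.
Proof.
move=> Pi0; rewrite (bigmax_eq_arg i0) //.
by case: arg_maxnP => // i Pi _; exists i.
Qed.

Lemma card_inj_bound (T : finType) (A : {set T}) (f : T -> nat) m :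
  {in A &, injective f} -> (forall a, a \in A -> f a < m) -> #|A| <= m.
Proof.
move=> injf bf; rewrite cardE.
have u : uniq (map f (enum A)).
  by rewrite map_inj_in_uniq ?enum_uniq // => x y; rewrite !mem_enum; apply: injf.
have := uniq_leq_size u (s2 := iota 0 m); rewrite size_map size_iota; apply.
by move=> x /mapP[a]; rewrite mem_enum => /bf aA ->; rewrite mem_iota.
Qed.

Definition Bo (a : 'I_n.+1) : X := (a, false).
Definition To (a : 'I_n.+1) : X := (a, true).

Section TSFacts.
Variable C : {set X * X}.
Hypothesis tC : TSX C.

Lemma C_arr u v : (u, v) \in C -> leX u v.
Proof. by case: tC => h _ _ _ /h. Qed.
Lemma C_refl u : (u, u) \in C.
Proof. by case: tC. Qed.
Lemma C_trans u v w : (u, v) \in C -> (v, w) \in C -> (u, w) \in C.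
Proof. by case: tC => _ _ h _; apply: h. Qed.
Lemma C_restr u v z : (u, v) \in C -> leX z v -> (mnX u z, z) \in C.
Proof. by case: tC => _ _ _ h; apply: h. Qed.
Lemma C_down u v w : (u, v) \in C -> leX u w -> leX w v -> (u, w) \in C.
Proof. by move=> h1 h2 h3; have := C_restr h1 h3; rewrite mnX_id. Qed.

Definition beta (u : 'I_n.+1) : nat := \max_(a : 'I_n.+1 | (Bo u, Bo a) \in C) a.

Lemma beta_ub u a : (Bo u, Bo a) \in C -> a <= beta u.
Proof. by move=> h; apply: (leq_bigmax_cond (F := fun a : 'I_n.+1 => val a)) h. Qed.

Lemma beta_in u : exists2 g : 'I_n.+1, (Bo u, Bo g) \in C & val g = beta u.
Proof.
have [g h1 h2] := max_attain (P := fun a : 'I_n.+1 => (Bo u, Bo a) \in C)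
   (fun a : 'I_n.+1 => val a) (C_refl (Bo u)).
by exists g.
Qed.

Lemma beta_ge (u : 'I_n.+1) : u <= beta u.
Proof. exact: beta_ub (C_refl _). Qed.

Lemma beta_le (u : 'I_n.+1) : beta u <= n.
Proof. by have [g _ <-] := beta_in u; rewrite -ltnS ltn_ord. Qed.

Lemma beta_step (u : 'I_n.+1) y : y \in C -> u <= y.1.1 <= beta u -> y.2.1 <= beta u.
Proof.
case: y => [[y1 e] [y2 f]] /= yC /andP[h1 h2].
have [g hg eg] := beta_in u.
have h3 : (Bo u, Bo y1) \in C.
  by apply: C_down hg _ _; rewrite /leX /= ?h1 ?eg ?h2.
have ar := C_arr yC; case/andP: (ar) => /= a1 a2.
have h4 : (mnX (y1, e) (Bo y2), Bo y2) \in C.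
  by apply: C_restr yC _; rewrite /leX /= leqnn.
have e4 : mnX (y1, e) (Bo y2) = Bo y1 by rewrite /mnX /= a1 andbF.
rewrite e4 in h4.
exact: beta_ub (C_trans h3 h4).
Qed.

Lemma vert (aM : X * X) (i : 'I_n.+1) :
  aM \in C -> ~~ aM.1.2 -> aM.2.2 -> i < aM.1.1 -> (Bo i, To i) \in C.
Proof.
case: aM => [[m e] [j f]] /=; case: e => //; case: f => // aC _ _ lt.
have /andP[/= a1 _] := C_arr aC.
have h := C_restr aC (z := To i) _.
have e4 : mnX (m, false) (To i) = Bo i.
  by rewrite /mnX /=; case: leqP => // h5; exfalso; move: h5; rewrite leqNgt lt.
rewrite -e4; apply: h; rewrite /leX /= leqnn andbT.
by apply: leq_trans a1; apply: ltnW.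
Qed.

End TSFacts.

Lemma inv_top R : R \subset arrX -> (forall r, r \in R -> r.2.2) ->
  forall u w : 'I_n.+1, (Bo u, Bo w) \in clX R -> u < w ->
  ((To u, To w) \in clX R) || ((Bo u, To w) \in clX R).
Proof.
move=> sRA topR; set C := clX R; have tC : TSX C := clX_TS sRA.
pose Qb (a : X * X) := (~~ a.1.2 && ~~ a.2.2 && (a.1.1 < a.2.1)) ==>
   (((To a.1.1, To a.2.1) \in C) || ((Bo a.1.1, To a.2.1) \in C)).
pose D := [set a in C | Qb a].
have DE : forall a, (a \in D) = (a \in C) && Qb a by move=> a; rewrite /D !inE.
suff sCD : C \subset D.
  move=> u w h lt; have := subsetP sCD _ h; rewrite DE => /andP[_].
  by rewrite /Qb /= lt.
apply: clX_min.
  split.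
  - by move=> [u v]; rewrite DE => /andP[/(C_arr tC)].
  - by move=> u; rewrite DE C_refl //= /Qb ltnn andbF.
  - move=> [u1 e1] [v1 e2] [w1 e3]; rewrite !DE => /andP[h1 q1] /andP[h2 q2].
    rewrite (C_trans tC h1 h2) /=; apply/implyP => /andP[/andP[/= b1 b3] lt].
    have /andP[/= l1 l1'] := C_arr tC h1; have /andP[/= l2 l2'] := C_arr tC h2.
    have b2 : ~~ e2 by move: b3 l2'; case: (e2); case: (e3).
    move: q1 q2; rewrite /Qb /= b1 b2 b3 /=.
    move: l1; rewrite leq_eqVlt => /orP[/eqP eq1|lt1].
      by move: lt; rewrite (val_inj eq1) => lt _ /implyP /(_ lt) H; exact: H.
    move: l2; rewrite leq_eqVlt => /orP[/eqP eq2|lt2].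
      by rewrite -(val_inj eq2) => /implyP /(_ lt1) H _; exact: H.
    move=> /implyP /(_ lt1) /orP[A1|A1] /implyP /(_ lt2) /orP[A2|A2].
    + by rewrite (C_trans tC A1 A2).
    + have hB : (Bo u1, Bo v1) \in C by move: h1; rewrite (negPf b1) (negPf b2).
      by rewrite (C_trans tC hB A2) orbT.
    + by rewrite (C_trans tC A1 A2) orbT.
    + have hB : (Bo u1, Bo v1) \in C by move: h1; rewrite (negPf b1) (negPf b2).
      by rewrite (C_trans tC hB A2) orbT.
  - move=> [u1 e1] [v1 e2] [z1 e3]; rewrite !DE => /andP[h1 q1] hz.
    rewrite (C_restr tC h1 hz) /=; apply/implyP => /andP[/andP[b1 b3] lt].
    rewrite mnX1 /= in lt.
    have lt' : u1 < z1 by move: lt; rewrite /minn; case: ifP => // _; rewrite ltnn.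
    have E : (mnX (u1, e1) (z1, e3)).1 = u1 by rewrite /mnX /= ltnW.
    rewrite E.
    have /andP[/= l1 l1'] := C_arr tC h1; have /andP[/= lz lz'] := hz.
    have down : forall x : X, (x, To v1) \in C -> x.1 <= z1 -> (x, To z1) \in C.
      move=> x hx lx; apply: (C_down tC hx); rewrite /leX /= ?lx ?lz //.
      by case: x.2.
    destruct e1; destruct e2 => //.
    + by rewrite (down (To u1) h1 (ltnW lt')).
    + by rewrite (down (Bo u1) h1 (ltnW lt')) orbT.
    + move: q1; rewrite /Qb /= (leq_trans lt' lz) /= => /orP[A|A].
        by rewrite (down (To u1) A (ltnW lt')).
      by rewrite (down (Bo u1) A (ltnW lt')) orbT.
apply/subsetP=> r rR; rewrite DE (subsetP (clX_sub R) _ rR) /Qb /=.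
by rewrite (topR r rR) andbF.
Qed.

Section Indep.
Variable S : {set X * X}.
Hypothesis SA : S \subset arrX.
Hypothesis iS : indepX S.

Lemma SAr s : s \in S -> leX s.1 s.2.
Proof. by move/(subsetP SA); rewrite inE. Qed.

Lemma tCs s : TSX (clX (S :\ s)).
Proof. by apply: clX_TS; apply: subset_trans SA; apply: subsetDl. Qed.

Lemma inCs s t : t \in S -> t != s -> t \in clX (S :\ s).
Proof. by move=> tS ne; apply: (subsetP (clX_sub _)); rewrite !inE ne. Qed.

Lemma noid s : s \in S -> s.1 != s.2.
Proof.
move=> sS; apply/eqP=> e; have := iS sS; case: s e sS => u v /= -> sS.
by rewrite C_refl //; apply: tCs.
Qed.

Lemma same_src s1 s2 : s1 \in S -> s2 \in S -> s1 != s2 -> s1.1 = s2.1 ->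
  leX s1.2 s2.2 -> False.
Proof.
move=> h1 h2 ne e le; have := iS h1.
have ne2 : s2 != s1 by rewrite eq_sym.
have := inCs h2 ne2; rewrite [s2]surjective_pairing => h3.
have h := C_restr (tCs s1) h3 le.
by move: h; rewrite -e mnX_id ?SAr // -surjective_pairing => ->.
Qed.


Lemma lt_same a : a \in S -> a.1.2 = a.2.2 -> a.1.1 < a.2.1.
Proof.
move=> aS e; have /andP[h1 _] := SAr aS; rewrite ltn_neqAle h1 andbT.
apply: contra (noid aS) => /eqP e1; apply/eqP.
by case: a e e1 {aS h1} => [[u x] [v y]] /= -> /val_inj ->.
Qed.

Lemma tgt_le (a : X * X) : (a.2.1 <= n)%N.
Proof. by rewrite -ltnS. Qed.

Lemma beta_lt_BB a : a \in S -> ~~ a.1.2 -> ~~ a.2.2 ->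
  beta (clX (S :\ a)) a.1.1 < a.2.1.
Proof.
case: a => [[u e] [v f]] /= aS; case: e aS => // aS _; case: f aS => // aS _.
rewrite ltnNge; apply/negP => le.
have [g hg eg] := beta_in (tCs (((u, false), (v, false)))) u.
have /andP[/= l1 _] := SAr aS.
have h1' : leX (Bo u) (Bo v) by rewrite /leX /= l1.
have h2' : leX (Bo v) (Bo g) by rewrite /leX /= eg le.
have h := C_down (tCs ((u, false), (v, false))) hg h1' h2'.
by have := iS aS; rewrite /Bo in h; rewrite h.
Qed.

Lemma BBBB a1 a2 : a1 \in S -> a2 \in S -> a1 != a2 ->
  ~~ a2.1.2 -> ~~ a2.2.2 -> a1.1.1 < a2.1.1 ->
  beta (clX (S :\ a1)) a1.1.1 = beta (clX (S :\ a2)) a2.1.1 -> False.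
Proof.
move=> h1 h2 ne b1 b2 lt e.
have h2C : a2 \in clX (S :\ a1) by apply: inCs; rewrite // eq_sym.
have ge := beta_ge (tCs a2) a2.1.1.
have le2 : a2.1.1 <= beta (clX (S :\ a1)) a1.1.1 by rewrite e.
have := beta_step (tCs a1) h2C (u := a1.1.1).
rewrite (ltnW lt) le2 => /(_ isT).
by rewrite e leqNgt beta_lt_BB.
Qed.

Lemma BBTT a1 a2 : a1 \in S -> a2 \in S -> a1 != a2 ->
  a2.1.2 -> a2.2.2 -> beta (clX (S :\ a1)) a1.1.1 = a2.1.1 -> False.
Proof.
move=> h1 h2 ne t1 t2 e.
have h2C : a2 \in clX (S :\ a1) by apply: inCs; rewrite // eq_sym.
have ge := beta_ge (tCs a1) a1.1.1.
have := beta_step (tCs a1) h2C (u := a1.1.1).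
rewrite -e ge leqnn => /(_ isT).
by rewrite e leqNgt lt_same // t1 t2.
Qed.

Lemma same_src2 a1 a2 : a1 \in S -> a2 \in S -> a1 != a2 -> a1.1 = a2.1 ->
  a1.2.2 = a2.2.2 -> False.
Proof.
move=> h1 h2 ne e1 e2.
case: (leqP a1.2.1 a2.2.1) => le.
  by apply: (same_src h1 h2 ne e1); rewrite /leX le e2 leqnn.
apply: (same_src h2 h1 _ (esym e1)); first by rewrite eq_sym.
by rewrite /leX (ltnW le) e2 leqnn.
Qed.

Lemma bound1 : #|[set a in S | a.1.2 == a.2.2]| <= n.
Proof.
pose f (a : X * X) := if a.1.2 then nat_of_ord a.1.1 else beta (clX (S :\ a)) a.1.1.
apply: (card_inj_bound (f := f)).
  move=> a1 a2; rewrite !inE => /andP[h1 /eqP q1] /andP[h2 /eqP q2].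
  case: (eqVneq a1 a2) => // ne; rewrite /f => e0; exfalso; move: e0.
  case E1 : a1.1.2 q1 => q1; case E2 : a2.1.2 q2 => q2.
  - move=> /val_inj e; apply: (same_src2 h1 h2 ne) => //; last by rewrite -q1 -q2.
    by rewrite [a1.1]surjective_pairing [a2.1]surjective_pairing e E1 E2.
  - by move=> e; apply: (BBTT h2 h1 _ _ _ (esym e)); rewrite ?E1 -?q1 // eq_sym.
  - by move=> e; apply: (BBTT h1 h2 ne _ _ e); rewrite ?E2 -?q2.
  - move=> e; case: (ltngtP a1.1.1 a2.1.1) => lt.
    + by apply: (BBBB h1 h2 ne _ _ lt e); rewrite ?E2 -?q2.
    + by apply: (BBBB h2 h1 _ _ _ lt (esym e)); rewrite ?E1 -?q1 // eq_sym.
    + apply: (same_src2 h1 h2 ne) => //; last by rewrite -q1 -q2.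
      by rewrite [a1.1]surjective_pairing [a2.1]surjective_pairing (val_inj lt) E1 E2.
move=> a; rewrite inE /f => /andP[aS /eqP q]; case: ifP => E.
  by apply: leq_trans (lt_same aS q) (tgt_le a).
apply: leq_trans (beta_lt_BB aS _ _) (tgt_le a); by rewrite -?q E.
Qed.

Lemma clash a1 a2 : a1 \in S -> a2 \in S -> a1 != a2 ->
  a1.1.1 <= a2.1.1 <= beta (clX (S :\ a1)) a1.1.1 ->
  beta (clX (S :\ a1)) a1.1.1 < a2.2.1 -> False.
Proof.
move=> h1 h2 ne h lt.
have h2C : a2 \in clX (S :\ a1) by apply: inCs; rewrite // eq_sym.
have := beta_step (tCs a1) h2C (u := a1.1.1); rewrite h => /(_ isT).
by rewrite leqNgt lt.
Qed.

Definition Mx := \max_(a | (a \in S) && (~~ a.1.2 && a.2.2)) nat_of_ord a.1.1.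

Lemma M_ub a : a \in S -> ~~ a.1.2 -> a.2.2 -> a.1.1 <= Mx.
Proof. by move=> h1 h2 h3; apply: (leq_bigmax_cond (F := fun a : X * X => nat_of_ord a.1.1)); rewrite h1 h2 h3. Qed.

Lemma M_in a : a \in S -> ~~ a.1.2 -> a.2.2 ->
  exists2 aM, aM \in S /\ (~~ aM.1.2 && aM.2.2) & nat_of_ord aM.1.1 = Mx.
Proof.
move=> h1 h2 h3.
have Pa : (a \in S) && (~~ a.1.2 && a.2.2) by rewrite h1 h2 h3.
have [aM /andP[m1 m2] m3] := max_attain (P := fun a : X * X => (a \in S) && (~~ a.1.2 && a.2.2))
   (fun a : X * X => nat_of_ord a.1.1) Pa.
by exists aM.
Qed.

Lemma M_le a : a \in S -> ~~ a.1.2 -> a.2.2 -> Mx <= n.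
Proof.
by move=> h1 h2 h3; have [aM _ <-] := M_in h1 h2 h3; rewrite -ltnS ltn_ord.
Qed.

Lemma vertC a : a \in S -> ~~ a.1.2 -> a.2.2 -> a.1.1 < Mx ->
  (Bo a.1.1, To a.1.1) \in clX (S :\ a).
Proof.
move=> h1 h2 h3 lt.
have [aM [aMS /andP[m1 m2]] m3] := M_in h1 h2 h3.
have ne : aM != a by apply/eqP => e; move: lt; rewrite -e -m3 ltnn.
have lt' : a.1.1 < aM.1.1 by rewrite m3.
exact: (vert (tCs a) (inCs aMS ne) m1 m2 lt').
Qed.

Lemma nonvert a : a \in S -> ~~ a.1.2 -> a.2.2 -> a.1.1 < Mx -> a.1.1 < a.2.1.
Proof.
move=> h1 h2 h3 lt; have V := vertC h1 h2 h3 lt.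
have /andP[l1 _] := SAr h1; rewrite ltn_neqAle l1 andbT.
apply/negP => /eqP e; have := iS h1.
have E : (Bo a.1.1, To a.1.1) = a.
  move: e h2 h3; case: a {h1 V lt l1} => [[u x] [v y]] /= /val_inj <-.
  by case: x; case: y.
by move: V; rewrite E => ->.
Qed.

Lemma bound3 : #|[set a in S | ~~ a.1.2]| <= n.+1.
Proof.
pose f (a : X * X) := if a.2.2 then (if nat_of_ord a.1.1 == Mx then n else nat_of_ord a.1.1)
                      else beta (clX (S :\ a)) a.1.1.
apply: (card_inj_bound (f := f)).
  move=> a1 a2; rewrite !inE => /andP[h1 b1] /andP[h2 b2].
  case: (eqVneq a1 a2) => // ne; rewrite /f => e0; exfalso; move: e0.
  have sameS : nat_of_ord a1.1.1 = nat_of_ord a2.1.1 -> a1.2.2 = a2.2.2 -> False.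
    move=> /val_inj e e2; apply: (same_src2 h1 h2 ne) => //.
    by rewrite [a1.1]surjective_pairing [a2.1]surjective_pairing e (negPf b1) (negPf b2).
  case T1 : a1.2.2; case T2 : a2.2.2.
  - case: eqP => E1; case: eqP => E2.
    + by move=> _; apply: sameS; rewrite ?E1 ?E2 ?T1 ?T2.
    + move=> e; have := M_ub h2 b2 T2; have := M_le h2 b2 T2; by move=> l1 l2; apply: E2; apply/eqP; rewrite eqn_leq l2 (leq_trans l1 (eq_leq e)).
    + move=> e; have := M_ub h1 b1 T1; have := M_le h1 b1 T1.
      by move=> l1 l2; apply: E1; apply/eqP; rewrite eqn_leq l2 (leq_trans l1 (eq_leq (esym e))).
    + by move=> e; apply: sameS; rewrite ?T1 ?T2.
  - case: eqP => E1 e.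
      have := beta_lt_BB h2 b2 (negbT T2); rewrite -e.
      have := M_le h1 b1 T1; have := tgt_le a2; by move=> l1 _ l2; have := leq_trans l2 l1; rewrite ltnn.
    have lt : a1.1.1 < Mx by rewrite ltn_neqAle (M_ub h1 b1 T1) andbT; apply/eqP.
    have l2 : beta (clX (S :\ a2)) a2.1.1 < a1.2.1 by rewrite -e; apply: nonvert.
    apply: (clash h2 h1 _ _ l2); first by rewrite eq_sym.
    by rewrite -e leqnn andbT e (beta_ge (tCs _)).
  - case: eqP => E2 e.
      have := beta_lt_BB h1 b1 (negbT T1); rewrite e.
      have := M_le h2 b2 T2; have := tgt_le a1; by move=> l1 _ l2; have := leq_trans l2 l1; rewrite ltnn.
    have lt : a2.1.1 < Mx by rewrite ltn_neqAle (M_ub h2 b2 T2) andbT; apply/eqP.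
    have l2 : beta (clX (S :\ a1)) a1.1.1 < a2.2.1 by rewrite e; apply: nonvert.
    apply: (clash h1 h2 ne _ l2).
    by rewrite -e leqnn andbT (beta_ge (tCs _)).
  - move=> e; case: (ltngtP a1.1.1 a2.1.1) => lt.
    + have l2 : beta (clX (S :\ a1)) a1.1.1 < a2.2.1 by rewrite e; apply: beta_lt_BB => //; rewrite T2.
      apply: (clash h1 h2 ne _ l2).
      by rewrite (ltnW lt) e (beta_ge (tCs _)).
    + have l2 : beta (clX (S :\ a2)) a2.1.1 < a1.2.1 by rewrite -e; apply: beta_lt_BB => //; rewrite T1.
      apply: (clash h2 h1 _ _ l2).
        by rewrite eq_sym.
      by rewrite (ltnW lt) -e (beta_ge (tCs _)).
    + by apply: sameS; rewrite ?T1 ?T2.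
move=> a; rewrite inE /f => /andP[aS b]; case: ifP => T.
  case: eqP => // _; apply: leq_ltn_trans (tgt_le a).
apply: leq_trans (beta_lt_BB aS b _) _; rewrite ?T //. exact: leq_trans (tgt_le a) (leqnSn n).
Qed.

Section AllTop.
Hypothesis allTop : forall a, a \in S -> a.2.2.

Lemma topreach a : a \in S -> ~~ a.1.2 -> a.1.1 < Mx ->
  exists2 g : 'I_n.+1, (Bo a.1.1, To g) \in clX (S :\ a) & val g = beta (clX (S :\ a)) a.1.1.
Proof.
move=> h1 h2 lt; have h3 := allTop h1.
have V := vertC h1 h2 h3 lt.
have [g hg eg] := beta_in (tCs a) a.1.1.
have ge := beta_ge (tCs a) a.1.1; rewrite -eg leq_eqVlt in ge.
case/orP: ge => [/eqP e|lt2].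
  by exists g => //; rewrite -(val_inj e).
exists g => //.
have sR : S :\ a \subset arrX by apply: subset_trans SA; apply: subsetDl.
have tR : forall r, r \in S :\ a -> r.2.2 by move=> r; rewrite inE => /andP[_ /allTop].
case/orP: (inv_top sR tR hg lt2) => // A.
have H := C_trans (tCs a) V; exact: H _ A.
Qed.

Lemma beta_lt_BT a : a \in S -> ~~ a.1.2 -> a.1.1 < Mx ->
  beta (clX (S :\ a)) a.1.1 < a.2.1.
Proof.
move=> h1 h2 lt; have h3 := allTop h1.
have [g hg eg] := topreach h1 h2 lt.
rewrite ltnNge; apply/negP => le.
have /andP[/= l1 _] := SAr h1.
have h1' : leX (Bo a.1.1) (To a.2.1) by rewrite /leX /= l1.
have h2' : leX (To a.2.1) (To g) by rewrite /leX /= eg le.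
have h := C_down (tCs a) hg h1' h2'.
have E : (Bo a.1.1, To a.2.1) = a.
  move: h2 h3; case: a {h1 h lt l1 h1' h2' hg eg le} => [[u x] [v y]] /=.
  by case: x; case: y.
by have := iS h1; rewrite -{1}E h.
Qed.

Lemma bound2 : #|S| <= n.+1.
Proof.
pose f (a : X * X) := if a.1.2 then nat_of_ord a.1.1 else
   if nat_of_ord a.1.1 == Mx then n else beta (clX (S :\ a)) a.1.1.
apply: (card_inj_bound (f := f)).
  move=> a1 a2 h1 h2.
  case: (eqVneq a1 a2) => // ne; rewrite /f => e0; exfalso; move: e0.
  have t1 := allTop h1; have t2 := allTop h2.
  have sameS : nat_of_ord a1.1.1 = nat_of_ord a2.1.1 -> a1.1.2 = a2.1.2 -> False.
    move=> /val_inj e e2; apply: (same_src2 h1 h2 ne); last by rewrite t1 t2.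
    by rewrite [a1.1]surjective_pairing [a2.1]surjective_pairing e e2.
  have TTBT : forall b1 b2, b1 \in S -> b2 \in S -> b1 != b2 -> b1.1.2 -> ~~ b2.1.2 ->
      nat_of_ord b1.1.1 = (if nat_of_ord b2.1.1 == Mx then n else beta (clX (S :\ b2)) b2.1.1) -> False.
    move=> b1 b2 g1 g2 nb c1 c2; have lb := lt_same g1 (etrans c1 (esym (allTop g1))).
    case: eqP => E2 e.
      by move: (leq_trans lb (tgt_le b1)); rewrite e ltnn.
    have lt : b2.1.1 < Mx.
      by rewrite ltn_neqAle (M_ub g2 c2 (allTop g2)) andbT; apply/eqP.
    have [g hg eg] := topreach g2 c2 lt.
    have b1C : b1 \in clX (S :\ b2) by apply: inCs; rewrite // eq_sym.
    have E : b1 = (To g, To b1.2.1).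
      move: c1 (allTop g1) b1C e; rewrite -eg.
      case: b1 {g1 nb lb} => [[u x] [v y]] /= -> -> _ /val_inj -> //.
    rewrite E in b1C; have := C_trans (tCs b2) hg b1C => hh.
    have ge := beta_ge (tCs b2) b2.1.1.
    have := beta_step (tCs b2) hh (u := b2.1.1); rewrite /= leqnn ge => /(_ isT).
    by rewrite -e leqNgt lb.
  case T1 : a1.1.2; case T2 : a2.1.2.
  - by move=> e; apply: sameS; rewrite ?T1 ?T2.
  - by apply: TTBT; rewrite ?T1 ?T2.
  - by move=> e; apply: (TTBT a2 a1) => //; rewrite ?T1 ?T2 // eq_sym.
  - have b1 : ~~ a1.1.2 by rewrite T1.
    have b2 : ~~ a2.1.2 by rewrite T2.
    case: eqP => E1; case: eqP => E2.
    + by move=> _; apply: sameS; rewrite ?E1 ?E2 ?T1 ?T2.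
    + move=> e; have lt : a2.1.1 < Mx.
        by rewrite ltn_neqAle (M_ub h2 b2 t2) andbT; apply/eqP.
      have := beta_lt_BT h2 b2 lt; rewrite -e => l.
      by have := leq_trans l (tgt_le a2); rewrite ltnn.
    + move=> e; have lt : a1.1.1 < Mx.
        by rewrite ltn_neqAle (M_ub h1 b1 t1) andbT; apply/eqP.
      have := beta_lt_BT h1 b1 lt; rewrite e => l.
      by have := leq_trans l (tgt_le a1); rewrite ltnn.
    + move=> e.
      have lt1 : a1.1.1 < Mx by rewrite ltn_neqAle (M_ub h1 b1 t1) andbT; apply/eqP.
      have lt2 : a2.1.1 < Mx by rewrite ltn_neqAle (M_ub h2 b2 t2) andbT; apply/eqP.
      case: (ltngtP a1.1.1 a2.1.1) => lt.
      * have l2 : beta (clX (S :\ a1)) a1.1.1 < a2.2.1 by rewrite e; apply: beta_lt_BT.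
        apply: (clash h1 h2 ne _ l2).
        by rewrite (ltnW lt) e (beta_ge (tCs _)).
      * have l2 : beta (clX (S :\ a2)) a2.1.1 < a1.2.1 by rewrite -e; apply: beta_lt_BT.
        apply: (clash h2 h1 _ _ l2); first by rewrite eq_sym.
        by rewrite (ltnW lt) -e (beta_ge (tCs _)).
      * by apply: sameS; rewrite ?T1 ?T2.
move=> a aS; rewrite /f; case: ifP => T.
  by apply: leq_trans (lt_same aS _) _; rewrite ?T ?allTop // ltnW // ltnS tgt_le.
case: eqP => E; first by [].
have b : ~~ a.1.2 by rewrite T.
have lt : a.1.1 < Mx by rewrite ltn_neqAle (M_ub aS b (allTop aS)) andbT; apply/eqP.
by apply: leq_trans (beta_lt_BT aS b lt) _; rewrite ltnW // ltnS tgt_le.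
Qed.

End AllTop.

End Indep.

Lemma indep_sub S S' : S' \subset S -> indepX S -> indepX S'.
Proof.
move=> sub iS s sS'; apply: contra (iS s (subsetP sub _ sS')).
by apply: (subsetP (clX_mono _)); apply: setSD.
Qed.

Lemma card_sub_sum (T : finType) (S : {set T}) (P : pred T) :
  #|[set a in S | P a]| = \sum_(a in S) (P a : nat).
Proof.
rewrite -sum1_card big_mkcond /= [RHS]big_mkcond /=.
by apply: eq_bigr => a _; rewrite inE; case: (a \in S); case: (P a).
Qed.

Theorem upperX S : S \subset arrX -> indepX S -> (#|S|).*2 <= 3 * n + 2.
Proof.
move=> SA iS.
have b1 := bound1 SA iS; have b3 := bound3 SA iS.
set S2 := [set a in S | a.2.2].
have s2 : S2 \subset S by apply/subsetP=> a; rewrite inE => /andP[].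
have b2 : #|S2| <= n.+1.
  apply: bound2; first exact: subset_trans s2 SA.
    exact: indep_sub s2 iS.
  by move=> a; rewrite inE => /andP[].
have E : #|[set a in S | a.1.2 == a.2.2]| + #|S2| + #|[set a in S | ~~ a.1.2]| = (#|S|).*2.
  rewrite /S2 !card_sub_sum -!big_split /= -mul2n -sum1_card big_distrr /=.
  apply: eq_bigr => a aS; have /andP[_ l] := SAr SA aS.
  by move: l; case: a.1.2; case: a.2.2.
by rewrite -E; lia.
Qed.

Lemma mnX1n u v : nat_of_ord (mnX u v).1 = minn u.1 v.1.
Proof. exact: mnX1. Qed.

Definition gapS (lo g : nat) (top : bool) : {set X * X} :=
  [set a : X * X | leX a.1 a.2 && ~~ [&& top ==> a.1.2, lo <= a.1.1, a.1.1 <= g & g < a.2.1]].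

Lemma TSX_gap lo g top : TSX (gapS lo g top).
Proof.
split.
- by move=> a; rewrite inE => /andP[].
- by move=> u; rewrite inE leXxx /=; lia.
- move=> [u1 e1] [v1 e2] [w1 e3]; rewrite !inE /leX /=.
  by case: e1; case: e2; case: e3; case: top => /=; lia.
- move=> [u1 e1] [v1 e2] [z1 e3]; rewrite !inE /leX mnX1n mnX2 /=.
  by case: e1; case: e2; case: e3; case: top => /=; lia.
Qed.

Definition crossS (lo hi : nat) : {set X * X} :=
  [set a : X * X | [&& leX a.1 a.2, ~~ [&& ~~ a.1.2, a.2.2, lo <= a.1.1 & hi <= a.2.1] &
     (lo < hi) ==> ~~ [&& a.1.2, a.1.1 <= hi.-1 & hi.-1 < a.2.1]]].

Lemma TSX_cross lo hi : TSX (crossS lo hi).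
Proof.
split.
- by move=> a; rewrite inE => /andP[].
- by move=> u; rewrite inE leXxx /=; lia.
- move=> [u1 e1] [v1 e2] [w1 e3]; rewrite !inE /leX /=.
  by case: e1; case: e2; case: e3 => /=; lia.
- move=> [u1 e1] [v1 e2] [z1 e3]; rewrite !inE /leX mnX1n mnX2 /=.
  by case: e1; case: e2; case: e3 => /=; lia.
Qed.

End XWorld.

Section Lower.
Variable n : nat.
Local Notation X := (X n).

Definition kk := n./2.
Lemma hn : n = kk.*2 + odd n.
Proof. by rewrite /kk addnC odd_double_half. Qed.

Lemma vI m : m <= n -> nat_of_ord (inord m : 'I_n.+1) = m.
Proof. by move=> h; rewrite inordK. Qed.

Definition TTe (t : nat) : X * X := (To (inord t), To (inord t.+1)).
Definition BBe (a : nat) : X * X := (Bo (inord a), Bo (inord (kk.*2.+1 - a))).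
Definition BTe (a : nat) : X * X := (Bo (inord a), To (inord (kk.*2 - a))).

Definition famX : {set X * X} :=
  [set TTe (val t) | t : 'I_kk] :|: [set BBe (val t).+1 | t : 'I_kk] :|:
  [set BTe (val t) | t : 'I_kk.+1] :|: (if odd n then [set TTe kk.*2] else set0).

Lemma famP t : t \in famX ->
  [\/ exists2 i, i < kk & t = TTe i, exists2 a, 0 < a <= kk & t = BBe a,
      exists2 a, a <= kk & t = BTe a | odd n /\ t = TTe kk.*2].
Proof.
rewrite !inE -!orbA => /or4P[/imsetP[i _ ->]|/imsetP[i _ ->]|/imsetP[i _ ->]|].
- by apply: Or41; exists i.
- by apply: Or42; exists i.+1 => //; rewrite ltn_ord.
- by apply: Or43; exists i => //; rewrite -ltnS.
- by case: ifP => [o|_]; rewrite ?inE // => /eqP ->; apply: Or44.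
Qed.

Lemma indep_by (S : {set X * X}) s D : TSX D ->
  (forall t, t \in S -> t != s -> t \in D) -> s \notin D -> s \notin clX (S :\ s).
Proof.
move=> tD h sD.
have sub : S :\ s \subset D.
  by apply/subsetP=> t; rewrite !inE => /andP[ne tS]; apply: h.
by apply: contra sD => /(subsetP (clX_min tD sub)).
Qed.

Lemma famA : famX \subset arrX n.
Proof.
have H := hn.
apply/subsetP=> t /famP[[i hi ->]|[a ha ->]|[a ha ->]|[o ->]];
  rewrite inE /leX /= !vI //; lia.
Qed.

Lemma indep_fam : indepX famX.
Proof.
have H := hn.
move=> s /famP[[i hi ->]|[a ha ->]|[a ha ->]|[o ->]].
- apply: (indep_by (D := gapS n 0 i true)); first exact: TSX_gap.
    move=> t /famP[[j hj ->]|[b hb ->]|[b hb ->]|[o ->]] ne;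
      rewrite inE /leX /= !vI //; try lia.
    have : j != i by apply: contraNneq ne => ->.
    lia.
  rewrite inE /leX /= !vI //; lia.
- apply: (indep_by (D := gapS n a (kk.*2 - a) false)); first exact: TSX_gap.
    move=> t /famP[[j hj ->]|[b hb ->]|[b hb ->]|[o ->]] ne;
      rewrite inE /leX /= !vI //; try lia.
    have : b != a by apply: contraNneq ne => ->.
    lia.
  rewrite inE /leX /= !vI //; lia.
- apply: (indep_by (D := crossS n a (kk.*2 - a))); first exact: TSX_cross.
    move=> t /famP[[j hj ->]|[b hb ->]|[b hb ->]|[o ->]] ne;
      rewrite inE /leX /= !vI //; try lia.
    have : b != a by apply: contraNneq ne => ->.
    lia.
  rewrite inE /leX /= !vI //; lia.
- apply: (indep_by (D := gapS n 0 kk.*2 true)); first exact: TSX_gap.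
    move=> t /famP[[j hj ->]|[b hb ->]|[b hb ->]|[o' ->]] ne;
      rewrite inE /leX /= !vI //; try lia.
    by rewrite eqxx in ne.
  rewrite inE /leX /= !vI //; lia.
Qed.

Lemma card_disjU (T : finType) (A B : {set T}) :
  A :&: B = set0 -> #|A :|: B| = #|A| + #|B|.
Proof. by move=> E; rewrite -cardsUI E cards0 addn0. Qed.

Lemma card_fam : #|famX| = 3 * kk + 1 + odd n.
Proof.
have H := hn.
have injT : injective (fun t : 'I_kk => TTe (val t)).
  move=> i j; have := ltn_ord i; have := ltn_ord j => hj hi.
  move=> /(congr1 (fun x : X * X => nat_of_ord x.1.1)) /=.
  rewrite !vI; try lia; move=> e; apply: val_inj; change (nat_of_ord i = nat_of_ord j); lia.
have injB : injective (fun t : 'I_kk => BBe (val t).+1).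
  move=> i j; have := ltn_ord i; have := ltn_ord j => hj hi.
  move=> /(congr1 (fun x : X * X => nat_of_ord x.1.1)) /=.
  rewrite !vI; try lia; move=> e; apply: val_inj; change (nat_of_ord i = nat_of_ord j); lia.
have injX : injective (fun t : 'I_kk.+1 => BTe (val t)).
  move=> i j; have := ltn_ord i; have := ltn_ord j => hj hi.
  move=> /(congr1 (fun x : X * X => nat_of_ord x.1.1)) /=.
  rewrite !vI; try lia; move=> e; apply: val_inj; change (nat_of_ord i = nat_of_ord j); lia.
rewrite /famX !card_disjU.
  rewrite !card_imset // !card_ord.
  by case: ifP => _; rewrite ?cards1 ?cards0; lia.
- apply/setP=> x; rewrite !inE; apply/andP; case=> /imsetP[i _ ->] /imsetP[j _].
  by rewrite /TTe /BBe => -[].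
- apply/setP=> x; rewrite !inE; apply/andP; case=> /orP[] /imsetP[i _ ->] /imsetP[j _].
    by rewrite /TTe /BTe => -[].
  by rewrite /BBe /BTe => -[].
- apply/setP=> x; rewrite !inE; apply/andP; case=> /orP[/orP[]|] /imsetP[i _ ->];
    case: ifP => o; rewrite ?inE // => /eqP.
  + rewrite /TTe => -[] /(congr1 (@nat_of_ord _)); rewrite !vI => [e _||]; have := ltn_ord i; lia.
  + by rewrite /TTe /BBe => -[].
  + by rewrite /TTe /BTe => -[].
Qed.

Lemma lowerX : exists S : {set X * X},
  [/\ S \subset arrX n, indepX S & #|S| = 3 * n./2 + 1 + odd n].
Proof. by exists famX; split; [exact: famA | exact: indep_fam | exact: card_fam]. Qed.

End Lower.

Section Arith.
Variables p q : nat.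
Hypotheses (pp : prime p) (pq : prime q) (npq : p != q).

Lemma logn_pq e : logn p (q ^ e) = 0.
Proof. by rewrite lognX logn_prime // (negPf npq) muln0. Qed.

Lemma ord_dvd_iff a1 (e1 : bool) b1 (e2 : bool) :
  (p ^ a1 * q ^ e1 %| p ^ b1 * q ^ e2) = (a1 <= b1) && (e1 <= e2).
Proof.
have p0 := prime_gt0 pp; have q0 := prime_gt0 pq.
apply/idP/idP.
  move=> h; apply/andP; split.
    have pos : 0 < p ^ b1 * q ^ e2 by rewrite muln_gt0 !expn_gt0 p0 q0.
    have := dvdn_leq_log p pos h.
    by rewrite !lognM ?expn_gt0 ?p0 ?q0 // !pfactorK // !logn_pq !addn0.
  case: e1 h => //; case: e2 => //= h.
  move: h; rewrite /= expn1 expn0 muln1 => h.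
  have : q %| p ^ b1 by apply: dvdn_trans h; rewrite dvdn_mull.
  rewrite Euclid_dvdX // dvdn_prime2 // => /andP[/eqP e _].
  by move: npq; rewrite e eqxx.
case/andP=> h1 h2; apply: dvdn_mul; rewrite dvdn_exp2l //.
Qed.

Lemma div_form d m : d %| p ^ m * q -> exists2 k, k <= m & d = p ^ k * q ^ (q %| d).
Proof.
have q0 := prime_gt0 pq.
case qd: (q %| d) => h.
  case/dvdnP: qd => k def; move: h; rewrite def dvdn_pmul2r // => /(dvdn_pfactor _ _ pp).
  by case=> j jm ->; exists j; rewrite // expn1.
have cq : coprime d q by rewrite coprime_sym prime_coprime // qd.
move: h; rewrite Gauss_dvdl // => /(dvdn_pfactor _ _ pp) [j jm ->].
by exists j; rewrite // expn0 muln1.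
Qed.

End Arith.

Lemma leX_mnXl n (u z : X n) : leX (mnX u z) u.
Proof. rewrite /leX mnX1n mnX2; case: u.2; case: z.2 => /=; lia. Qed.
Lemma leX_mnXr n (u z : X n) : leX (mnX u z) z.
Proof. rewrite /leX mnX1n mnX2; case: u.2; case: z.2 => /=; lia. Qed.
Lemma leX_glb n (m u z : X n) : leX m u -> leX m z -> leX m (mnX u z).
Proof.
rewrite /leX mnX1n mnX2; case: m.2; case: u.2; case: z.2 => /=; lia.
Qed.

Section Bridge.
Local Open Scope group_scope.
Variables (gT : finGroupType) (x : gT) (p q n : nat).
Hypotheses (pp : prime p) (pq : prime q) (npq : p != q) (ox : #[x] = (p ^ n * q)%N).
Local Notation Xn := (X n).

Definition ordX (a : Xn) : nat := (p ^ a.1 * q ^ a.2)%N.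
Definition phi (a : Xn) : {set gT} := <[x ^+ (#[x] %/ ordX a)]>.

Lemma ordX_dvd a : ordX a %| #[x].
Proof.
rewrite ox /ordX.
have -> : (p ^ n * q = p ^ n * q ^ true)%N by rewrite /= expn1.
by rewrite ord_dvd_iff // -ltnS ltn_ord; case: a.2.
Qed.

Lemma card_phi a : #|phi a| = ordX a.
Proof.
have hd := ordX_dvd a; rewrite /phi -orderE orderXdiv ?dvdn_div //.
have x0 := order_gt0 x.
case/dvdnP: hd => k hk.
have o0 : 0 < ordX a by rewrite /ordX muln_gt0 !expn_gt0 !prime_gt0.
have k0 : 0 < k by move: x0; rewrite hk muln_gt0 => /andP[].
by rewrite hk mulnK // mulKn.
Qed.

Lemma phi_sub a : phi a \subset <[x]>.
Proof. exact: cycleX. Qed.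

Lemma phi_le a b : (phi a \subset phi b) = leX a b.
Proof.
rewrite -(cardSg_cyclic (cycle_cyclic x) (phi_sub a) (phi_sub b)) !card_phi.
by rewrite /ordX ord_dvd_iff.
Qed.

Lemma phi_inj : injective phi.
Proof.
move=> a b e; apply: leX_anti; by rewrite -phi_le e subxx.
Qed.

Lemma phi_surj (H : {set gT}) : group_set H -> H \subset <[x]> -> exists a, H = phi a.
Proof.
move=> gH sH; pose HG := Group gH.
have : #|HG| %| (p ^ n * q)%N by rewrite -ox orderE cardSg.
case/(div_form pp pq) => m mn dm.
have mlt : m < n.+1 by rewrite ltnS.
exists (Ordinal mlt, q %| #|H|).
apply/eqP; rewrite -[H]/(gval HG) -[phi _]/(gval [group of phi (Ordinal mlt, q %| #|H|)]).
rewrite (eq_subG_cyclic (cycle_cyclic x)) ?phi_sub // card_phi /ordX /=.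
by rewrite -dm.
Qed.

Lemma phi_gs a : group_set (phi a).
Proof. exact: groupP. Qed.

Lemma phi_meet a b : phi a :&: phi b = phi (mnX a b).
Proof.
have gs : group_set (phi a :&: phi b) by apply: group_setI.
have [m em] := phi_surj gs (subset_trans (subsetIl _ _) (phi_sub a)).
have lma : leX m a by rewrite -phi_le -em subsetIl.
have lmb : leX m b by rewrite -phi_le -em subsetIr.
have l2 : leX (mnX a b) m.
  by rewrite -phi_le -em subsetI !phi_le leX_mnXl leX_mnXr.
by rewrite em (leX_anti l2 (leX_glb lma lmb)).
Qed.

Definition phi2 (a : Xn * Xn) : {set gT} * {set gT} := (phi a.1, phi a.2).
Definition psi (A : {set {set gT} * {set gT}}) : {set Xn * Xn} := [set a | phi2 a \in A].
Definition Phi (B : {set Xn * Xn}) : {set {set gT} * {set gT}} := phi2 @: B.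

Lemma phi2_inj : injective phi2.
Proof. by move=> [a b] [c d] [/phi_inj -> /phi_inj ->]. Qed.

Lemma conj_phi a g : g \in <[x]> -> phi a :^ g = phi a.
Proof.
move=> gG; apply/normP.
exact: (subsetP (sub_abelian_norm (cycle_abelian x) (phi_sub a))).
Qed.

Lemma TSG_to_X T : is_transfer_system <[x]> T -> TSX (psi T).
Proof.
case/and5P => /forall_inP h1 /forallP h2 /forall_inP h3 /forall_inP h4 /forall_inP h5.
split.
- move=> [u v]; rewrite inE => /h1; rewrite /is_arrow /= => /and3P[_ _ sb].
  by rewrite -phi_le.
- move=> u; rewrite inE; apply: (implyP (h2 (phi u))).
  by rewrite /is_subgroup phi_gs phi_sub.
- move=> u v w; rewrite !inE => A B; have /forall_inP := h3 _ A.
  by move=> /(_ _ B); rewrite /= eqxx.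
- move=> u v z; rewrite !inE => A lz; have /forallP/(_ (phi z)) := h5 _ A.
  by rewrite /is_subgroup /= phi_gs phi_le lz /= phi_meet.
Qed.

Lemma TSX_to_G B : TSX B -> is_transfer_system <[x]> (Phi B).
Proof.
case=> h1 h2 h3 h4; apply/and5P; split.
- apply/forall_inP => y /imsetP[a aB ->].
  by rewrite /is_arrow /is_subgroup /= !phi_gs !phi_sub phi_le h1.
- apply/forallP => H; apply/implyP => /andP[gH sH].
  have [u ->] := phi_surj gH sH; apply/imsetP; exists (u, u) => //.
- apply/forall_inP => y /imsetP[a aB ->]; apply/forall_inP => y' /imsetP[b bB ->].
  apply/implyP => /eqP /= /phi_inj e; apply/imsetP; exists (a.1, b.2) => //.
  apply: (h3 _ a.2); first by rewrite -surjective_pairing.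
  by rewrite e -surjective_pairing.
- apply/forall_inP => y /imsetP[a aB ->]; apply/forall_inP => g gG /=.
  by rewrite !conj_phi //; apply/imsetP; exists a.
- apply/forall_inP => y /imsetP[a aB ->]; apply/forallP => L; apply/implyP => /andP[gL sL] /=.
  have [z ez] := phi_surj gL (subset_trans sL (phi_sub _)); rewrite ez in sL *.
  rewrite phi_meet; apply/imsetP; exists (mnX a.1 z, z) => //.
  by apply: (h4 _ a.2); rewrite -?surjective_pairing // -phi_le.
Qed.

Lemma gen_Phi (R : {set Xn * Xn}) : R \subset arrX n -> gen_ts <[x]> (Phi R) = Phi (clX R).
Proof.
move=> sR; apply/eqP; rewrite /gen_ts eqEsubset; apply/andP; split.
  apply: bigcap_inf; rewrite TSX_to_G; last exact: clX_TS.
  exact: imsetS (clX_sub R).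
apply/subsetP => y /imsetP[a aC ->]; apply/bigcapP => T /andP[tT sT].
have tX := TSG_to_X tT.
have sRX : R \subset psi T.
  by apply/subsetP => r rR; rewrite inE; apply: (subsetP sT); apply/imsetP; exists r.
by have := subsetP (clX_min tX sRX) _ aC; rewrite inE.
Qed.

Lemma imsetD1inj (A : {set Xn * Xn}) a : Phi (A :\ a) = Phi A :\ phi2 a.
Proof.
apply/setP => y; rewrite !inE; apply/imsetP/andP.
  case=> b; rewrite !inE => /andP[ne bA] ->; split; last exact: imset_f.
  by apply: contra ne => /eqP /phi2_inj ->.
case=> ne /imsetP[b bA e]; exists b => //; rewrite !inE bA andbT.
by apply: contra ne => /eqP eb; rewrite e eb.
Qed.

Lemma upper_G T S : is_transfer_system <[x]> T -> minimal_generating <[x]> S T ->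
  (#|S|).*2 <= 3 * n + 2.
Proof.
move=> tT /and4P[sST _ /eqP gST /forall_inP minS].
case/and5P: tT => /forall_inP h1 _ _ _ _.
set SX := psi S.
have ES : S = Phi SX.
  apply/setP => y; apply/idP/imsetP.
    move=> yS; have := h1 _ (subsetP sST _ yS).
    case/and3P => /andP[g1 s1] /andP[g2 s2] _.
    have [u eu] := phi_surj g1 s1; have [v ev] := phi_surj g2 s2.
    exists (u, v); rewrite ?inE /phi2 /= -eu -ev -?surjective_pairing //.
  by case=> a; rewrite inE => aS ->.
have SXA : SX \subset arrX n.
  apply/subsetP => a; rewrite !inE => aS; have := h1 _ (subsetP sST _ aS).
  by case/and3P => _ _; rewrite /= phi_le.
have iSX : indepX SX.
  move=> s sSX; apply/negP => sC.
  have sS : phi2 s \in S by move: sSX; rewrite inE.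
  have := minS _ sS; rewrite ES -imsetD1inj gen_Phi; last first.
    by apply: subset_trans SXA; apply: subsetDl.
  suff -> : clX (SX :\ s) = clX SX by rewrite -gen_Phi // -ES gST eqxx.
  apply/eqP; rewrite eqEsubset clX_mono ?subsetDl //=.
  apply: clX_min; first by apply: clX_TS; apply: subset_trans SXA; apply: subsetDl.
  apply/subsetP => t tS; case: (eqVneq t s) => [->|ne] //.
  by apply: (subsetP (clX_sub _)); rewrite in_setD1 ne tS.
have -> : #|S| = #|SX| by rewrite ES card_imset //; apply: phi2_inj.
exact: upperX SXA iSX.
Qed.

Lemma lower_G : exists2 T, is_transfer_system <[x]> T &
  exists2 S, minimal_generating <[x]> S T & #|S| = 3 * n./2 + 1 + odd n.
Proof.
have [SX [SXA iSX cSX]] := lowerX n.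
have tC := clX_TS SXA.
exists (Phi (clX SX)); first exact: TSX_to_G.
exists (Phi SX); last by rewrite card_imset //; apply: phi2_inj.
apply/and4P; split.
- exact: imsetS (clX_sub SX).
- apply/forall_inP => y /imsetP[a aS ->]; rewrite /is_identity_arrow /=.
  by apply: contra (noid SXA iSX aS) => /eqP /phi_inj ->.
- by rewrite gen_Phi.
- apply/forall_inP => y /imsetP[a aS ->]; rewrite -imsetD1inj gen_Phi; last first.
    by apply: subset_trans SXA; apply: subsetDl.
  apply/negP => /eqP E.
  have : phi2 a \in Phi (clX SX) by apply: imset_f; apply: (subsetP (clX_sub _)).
  rewrite -E mem_imset; last exact: phi2_inj.
  by apply/negP; apply: iSX.
Qed.

End Bridge.

Theorem corollary6p6 (gT : finGroupType) (G : {group gT}) (p q n : nat) :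
  prime p -> prime q -> p != q -> 1 <= n ->
  cyclic G -> #|G| = p ^ n * q ->
  (forall k, n = k.*2 -> complexity G = 3 * k + 1) /\
  (forall k, n = k.*2.+1 -> complexity G = 3 * k + 2).
Proof.
move=> pp pq npq _ /cyclicP [x Gx] oG.
have ox : #[x]%g = p ^ n * q by rewrite orderE -Gx oG.
have hn : n = n./2.*2 + odd n by rewrite addnC odd_double_half.
have cE : complexity G = 3 * n./2 + 1 + odd n.
  rewrite Gx; apply/eqP; rewrite eqn_leq; apply/andP; split.
    apply/bigmax_leqP => T tT; apply/bigmax_leqP => S mS.
    have := upper_G pp pq npq ox tT mS; lia.
  have [T tT [S mS cS]] := lower_G pp pq npq ox.
  have h1 : #|S| <= mgen <[x]>%g T.
    exact: (leq_bigmax_cond (P := fun S => minimal_generating <[x]>%g S T) (F := fun S : {set arrowT gT} => #|S|) S mS).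
  have h2 : mgen <[x]>%g T <= complexity <[x]>%g.
    exact: (leq_bigmax_cond (P := fun T => is_transfer_system <[x]>%g T) (F := fun T => mgen <[x]>%g T) T tT).
  by rewrite -cS; apply: leq_trans h1 h2.
split => k ek; rewrite cE ek.
  by rewrite doubleK odd_double addn0.
have -> : k.*2.+1 = true + k.*2 by [].
by rewrite half_bit_double /= odd_double; lia.
Qed.
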